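(* Let $S$ be a finite set of points in $\mathbb{R}^d$ with Euclidean distance, $f\ge0$ an integer, $0<\theta<\pi/4$, $\mathcal{C}$ a cone collection as in the context, and $\Theta=\Theta(\theta,2f+1)$. Let $F$ be a set of edges of $\Theta$ such that $(S,F)$ has maximum degree at most $f$. Then for every edge $\{p,q\}$ of $K_S\setminus F$, $\delta_{\Theta\setminus F}(p,q)\le t\,|pq|$, where $t=1/(\cos\theta-\sin\theta)$.
   Context: $K_S$ is the complete graph on $S$ with edge weights the Euclidean distances; all graphs have Euclidean edge weights; $\delta_X$ is shortest-path distance in $X$; $X\setminus F$ is $X$ with the edges of $F$ removed. $\mathcal{C}$ is a finite collection of cones with apex at the origin covering $\mathbb{R}^d$, each of angular diameter at most $\theta$, i.e. $\max\{\angle(0x,0y):x,y\in C\setminus\{0\}\}\le\theta$. For each $C\in\mathcal{C}$ fix a ray $\ell_C$ from the origin contained in $C$. For $p\in S$: $C+p=\{x+p:x\in C\}$, $\ell_C+p$ is the translate of $\ell_C$ emanating from $p$, and $S_{p,C}=(C+p)\cap(S\setminus\{p\})$. The graph $\Theta(\theta,k)$ has vertex set $S$, and for each $p\in S$ and $C\in\mathcal{C}$ it contains an edge from $p$ to each of $\min(k,|S_{p,C}|)$ points of $S_{p,C}$ whose orthogonal projections onto $\ell_C+p$ are closest to $p$ (ties broken arbitrarily). *)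

(* Defs.v *)
From HB Require Import structures.
From mathcomp Require Import all_boot all_order all_algebra.
From mathcomp Require Import all_classical all_reals all_analysis.
Set Implicit Arguments. Unset Strict Implicit. Unset Printing Implicit Defensive.
Import Order.TTheory GRing.Theory Num.Theory.
Local Open Scope ring_scope.

Section Geom.
Variables (R : realType) (d : nat).
Notation pt := 'rV[R]_d.

Definition dotp (x y : pt) : R := \sum_(i < d) x ord0 i * y ord0 i.
Definition eucl_norm (x : pt) : R := Num.sqrt (dotp x x).
Definition eucl_dist (x y : pt) : R := eucl_norm (x - y).

Definition angle (x y : pt) : R := acos (dotp x y / (eucl_norm x * eucl_norm y)).

Definition is_cone (C : pred pt) : Prop :=
  forall x (l : R), x \in C -> 0 < l -> l *: x \in C.

(* A finite collection of cones (indexed by a finType I) covering R^d,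
   each of angular diameter at most theta, with a chosen ray ell_C = {l u : l >= 0}
   contained in each cone C. *)
Definition cone_collection (I : finType) (Cn : I -> pred pt) (u : I -> pt)
    (theta : R) : Prop :=
  [/\ forall i, is_cone (Cn i),
      forall x : pt, exists i, x \in Cn i,
      forall i x y, x \in Cn i -> y \in Cn i -> x != 0 -> y != 0 ->
         angle x y <= theta,
      forall i, u i != 0 &
      forall i (l : R), 0 <= l -> l *: u i \in Cn i].

Definition proj_ray (p v x : pt) : pt :=
  p + Num.max 0 (dotp (x - p) v / dotp v v) *: v.

Definition SpC (S : seq pt) (C : pred pt) (p : pt) : seq pt :=
  [seq x <- S | (x != p) && (x - p \in C)].

(* sel is a valid choice of Theta(theta,k) out-neighbours: for each p in S and
   cone i, sel p i consists of min(k, |S_{p,C}|) points of S_{p,C} whose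
   projections onto ell_C + p are closest to p (ties broken arbitrarily). *)
Definition theta_selection (I : finType) (Cn : I -> pred pt) (u : I -> pt)
    (S : seq pt) (k : nat) (sel : pt -> I -> seq pt) : Prop :=
  forall p i, p \in S ->
    [/\ uniq (sel p i),
        {subset sel p i <= SpC S (Cn i) p},
        size (sel p i) = minn k (size (SpC S (Cn i) p)) &
        forall q r, q \in sel p i -> r \in SpC S (Cn i) p -> r \notin sel p i ->
          eucl_dist (proj_ray p (u i) q) p <= eucl_dist (proj_ray p (u i) r) p].

Definition theta_edge (I : finType) (S : seq pt) (sel : pt -> I -> seq pt)
    (p q : pt) : Prop :=
  [/\ p \in S, q \in S & exists i, q \in sel p i \/ p \in sel q i].

(* delta_G(p,q) <= b for the Euclidean-weighted graph G on S with edge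
   relation E: there is a walk p = x_0, ..., x_n = q in G of total
   Euclidean length at most b. *)
Definition graph_dist_le (S : seq pt) (E : pt -> pt -> Prop) (p q : pt) (b : R)
  : Prop :=
  exists (n : nat) (x : nat -> pt),
    [/\ x 0%N = p, x n = q,
        forall j, (j <= n)%N -> x j \in S,
        forall j, (j < n)%N -> E (x j) (x j.+1) &
        \sum_(j < n) eucl_dist (x j) (x j.+1) <= b].

End Geom.

(* Main.v *)
Require Import Defs.
From HB Require Import structures.
From mathcomp Require Import all_boot all_order all_algebra.
From mathcomp Require Import all_classical all_reals all_analysis.
From mathcomp Require Import ring lra zify.
Import Order.TTheory GRing.Theory Num.Theory.
Local Open Scope ring_scope.
Section Aux.
Context {R : realType} {d : nat}.
Notation pt := 'rV[R]_d.

Lemma dotpC (x y : pt) : dotp x y = dotp y x.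
Proof. by apply: eq_bigr => i _; rewrite mulrC. Qed.

Lemma dotpDl (x y z : pt) : dotp (x + y) z = dotp x z + dotp y z.
Proof. by rewrite /dotp -big_split; apply: eq_bigr => i _; rewrite !mxE mulrDl. Qed.

Lemma dotpNl (x z : pt) : dotp (- x) z = - dotp x z.
Proof. by rewrite /dotp -sumrN; apply: eq_bigr => i _; rewrite !mxE mulNr. Qed.

Lemma dotpZl a (x z : pt) : dotp (a *: x) z = a * dotp x z.
Proof. by rewrite /dotp mulr_sumr; apply: eq_bigr => i _; rewrite !mxE mulrA. Qed.

Lemma dotpBl (x y z : pt) : dotp (x - y) z = dotp x z - dotp y z.
Proof. by rewrite dotpDl dotpNl. Qed.

Lemma dotpBr (x y z : pt) : dotp z (x - y) = dotp z x - dotp z y.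
Proof. by rewrite dotpC dotpBl !(dotpC z). Qed.

Lemma dotpZr a (x z : pt) : dotp z (a *: x) = a * dotp z x.
Proof. by rewrite dotpC dotpZl dotpC. Qed.

Lemma dotpxx_ge0 (x : pt) : 0 <= dotp x x.
Proof. by apply: sumr_ge0 => i _; rewrite -expr2 sqr_ge0. Qed.

Lemma dotpxx_eq0 (x : pt) : dotp x x = 0 -> x = 0.
Proof.
move=> /eqP; rewrite psumr_eq0; last by move=> i _; rewrite -expr2 sqr_ge0.
move=> /allP H; apply/rowP => i; rewrite mxE.
have := H i (mem_index_enum i); rewrite -expr2 sqrf_eq0 => /eqP.
by [].
Qed.

Lemma dotp0r (x : pt) : dotp x 0 = 0.
Proof. by rewrite /dotp big1 // => i _; rewrite mxE mulr0. Qed.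

Lemma norm_ge0 (x : pt) : 0 <= eucl_norm x.
Proof. exact: sqrtr_ge0. Qed.

Lemma norm_sq (x : pt) : eucl_norm x ^+ 2 = dotp x x.
Proof. by rewrite /eucl_norm sqr_sqrtr // dotpxx_ge0. Qed.

Lemma norm_gt0 (x : pt) : x != 0 -> 0 < eucl_norm x.
Proof.
move=> hx; rewrite /eucl_norm sqrtr_gt0 lt_neqAle dotpxx_ge0 andbT.
by apply/eqP => h; move/eqP: hx; apply; apply: dotpxx_eq0.
Qed.

Lemma normN (x : pt) : eucl_norm (- x) = eucl_norm x.
Proof. by rewrite /eucl_norm dotpNl dotpC dotpNl opprK. Qed.

Lemma normZ a (x : pt) : 0 <= a -> eucl_norm (a *: x) = a * eucl_norm x.
Proof.
move=> ha; rewrite /eucl_norm dotpZl dotpZr mulrA sqrtrM ?mulr_ge0 //.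
by rewrite -expr2 sqrtr_sqr ger0_norm.
Qed.

Lemma cs_sq (x y : pt) : dotp x y ^+ 2 <= dotp x x * dotp y y.
Proof.
have [y0|yn0] := eqVneq y 0.
  by rewrite y0 !dotp0r expr0n /= mulr0.
have yy0 : 0 < dotp y y.
  rewrite lt_neqAle dotpxx_ge0 andbT; apply/eqP => h.
  by move/eqP: yn0; apply; apply: dotpxx_eq0.
set t := dotp x y / dotp y y.
have ht : t * dotp y y = dotp x y by rewrite /t mulfVK // gt_eqF.
have h0 := dotpxx_ge0 (x - t *: y).
rewrite !dotpBl !dotpBr !dotpZl !dotpZr (dotpC y x) in h0.
nra.
Qed.

Lemma cs (x y : pt) : `|dotp x y| <= eucl_norm x * eucl_norm y.
Proof.
rewrite -sqrtr_sqr /eucl_norm -sqrtrM ?dotpxx_ge0 //.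
by rewrite ler_sqrt ?mulr_ge0 ?dotpxx_ge0 // cs_sq.
Qed.

Lemma cs_le (x y : pt) : dotp x y <= eucl_norm x * eucl_norm y.
Proof. exact: le_trans (ler_norm _) (cs x y). Qed.


Lemma angle_cos (x y : pt) th : x != 0 -> y != 0 -> 0 <= th -> th <= pi ->
  angle x y <= th -> cos th * (eucl_norm x * eucl_norm y) <= dotp x y.
Proof.
move=> hx hy th0 thpi ha.
have nxy : 0 < eucl_norm x * eucl_norm y by rewrite mulr_gt0 ?norm_gt0.
set z := dotp x y / (eucl_norm x * eucl_norm y).
have hz : -1 <= z <= 1.
  have := cs x y; rewrite ler_norml => /andP[h1 h2].
  by rewrite /z ler_pdivlMr // ler_pdivrMr // mulN1r h1 mul1r h2.
have zin : z \in `[-1, 1] by rewrite in_itv.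
rewrite -ler_pdivlMr //; rewrite -/z.
rewrite leNgt; apply/negP => hlt.
have := acosK zin; move=> hc.
move: hlt; rewrite -hc.
rewrite ltr_cos ?in_itv /= ?th0 ?thpi ?acos_ge0 ?acos_lepi //.
by rewrite ltNge ha.
Qed.

Lemma proj_dist (p w x : pt) :
  eucl_dist (proj_ray p w x) p = Num.max 0 (dotp (x - p) w / dotp w w) * eucl_norm w.
Proof.
rewrite /eucl_dist /proj_ray.
set a := (_ *: w).
have -> : p + a - p = a by rewrite [p + a]addrC addrK.
rewrite normZ //.
by rewrite le_max lexx.
Qed.


Lemma geo (x y w : pt) th : x != 0 -> y != 0 -> w != 0 ->
  0 < cos th -> 0 < sin th -> 0 < cos th - sin th ->
  cos th * (eucl_norm x * eucl_norm y) <= dotp x y ->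
  cos th * (eucl_norm x * eucl_norm w) <= dotp x w ->
  dotp x w <= dotp y w ->
  eucl_norm x + eucl_norm (x - y) / (cos th - sin th)
     <= eucl_norm y / (cos th - sin th) /\ eucl_norm (x - y) < eucl_norm y.
Proof.
move=> hx hy hw hco hs hc hxy hxw hw2.
have m0 := norm_gt0 _ hx; have L0 := norm_gt0 _ hy; have W0 := norm_gt0 _ hw.
have r0 := norm_ge0 (x - y).
have hr : eucl_norm (x - y) ^+ 2 = eucl_norm x ^+ 2 - 2 * dotp x y + eucl_norm y ^+ 2.
  rewrite !norm_sq dotpBl !dotpBr (dotpC y x); ring.
have hcs := cs_le y w.
have pyt := cos2Dsin2 th.
move: hr hxy hxw hw2 hcs pyt m0 L0 W0 r0 hc hco hs.
set m := eucl_norm x; set L := eucl_norm y; set W := eucl_norm w.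
set r := eucl_norm (x - y); set co := cos th; set s := sin th.
move=> hr hxy hxw hw2 hcs pyt m0 L0 W0 r0 hc hco hs.
have hmL : m * co <= L.
  have e1 : co * (m * W) <= L * W by lra.
  have : 0 <= (L - m * co) * W.
    have -> : (L - m * co) * W = L * W - co * (m * W) by ring.
    lra.
  by rewrite pmulr_lge0 // subr_ge0.
have h2 : r ^+ 2 <= (L - (co - s) * m) ^+ 2.
  have id : (L - (co - s) * m) ^+ 2 - (m ^+ 2 - 2 * (co * (m * L)) + L ^+ 2)
     = 2 * (s * m * (L - m * co)) + m ^+ 2 * (co ^+ 2 + s ^+ 2 - 1) by ring.
  rewrite pyt subrr mulr0 addr0 in id.
  have : 0 <= s * m * (L - m * co) by rewrite !mulr_ge0 ?subr_ge0 // ltW.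
  lra.
have h3 : 0 <= L - (co - s) * m by nra.
have h4 : r <= L - (co - s) * m by nra.
split; last by nra.
rewrite -(ler_pM2r hc) mulrDl !divfK ?gt_eqF //.
nra.
Qed.

Check 1.
End Aux.
Lemma count_uniq_sub (T : eqType) (a : pred T) (s1 s2 : seq T) :
  uniq s1 -> {subset s1 <= s2} -> (count a s1 <= count a s2)%N.
Proof.
move=> u12 sub; rewrite -!size_filter; apply: uniq_leq_size; first exact: filter_uniq.
by move=> x; rewrite !mem_filter => /andP[-> /sub].
Qed.

Lemma count_lt (T : eqType) (a b : pred T) (s : seq T) z :
  (forall x, a x -> b x) -> z \in s -> b z -> ~~ a z -> (count a s < count b s)%N.
Proof.
move=> ab; elim: s => // y s IH; rewrite inE => /orP[/eqP <-|hz] bz naz /=.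
  rewrite bz (negbTE naz) add0n add1n ltnS; exact: sub_count.
have := IH hz bz naz; have : (a y <= b y)%N by case: (a y) (ab y) => // ->.
lia.
Qed.

Lemma nat_aux (f a b : nat) : (a <= f + f)%N -> (a + b = 2 * f + 1)%N -> (0 < b)%N.
Proof. lia. Qed.

Lemma nat_aux2 (a b c e f : nat) : (a + b = c + e)%N -> (c <= f)%N -> (e <= f)%N -> (a <= f + f)%N.
Proof. lia. Qed.

Theorem lemma11 (R : realType) (d : nat) (S : seq 'rV[R]_d) (f : nat)
    (theta : R) (I : finType) (Cn : I -> pred 'rV[R]_d) (u : I -> 'rV[R]_d)
    (sel : 'rV[R]_d -> I -> seq 'rV[R]_d) (F : rel 'rV[R]_d) :
  uniq S ->
  0 < theta -> theta < pi / 4%:R ->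
  cone_collection Cn u theta ->
  theta_selection Cn u S (2 * f + 1) sel ->
  (* F is a set of (undirected) edges of Theta *)
  (forall p q, F p q = F q p) ->
  (forall p q, F p q -> theta_edge S sel p q) ->
  (* (S, F) has maximum degree at most f *)
  (forall p, p \in S -> (count (F p) S <= f)%N) ->
  forall p q, p \in S -> q \in S -> p != q -> ~~ F p q ->
    graph_dist_le S (fun x y => theta_edge S sel x y /\ ~~ F x y) p q
      (eucl_dist p q / (cos theta - sin theta)).
Proof.
move=> uS th0 thpi [Hcone Hcov Hdiam Hu0 Hray] Hsel Fsym FE Fdeg.
have pi0 := pi_gt0 R.
have hco : 0 < cos theta by apply: cos_gt0_pihalf; apply/andP; split; lra.
have hs : 0 < sin theta by apply: sin_gt0_pihalf; apply/andP; split; lra.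
have hc : 0 < cos theta - sin theta.
  have : 0 < cos (theta + theta) by apply: cos_gt0_pihalf; apply/andP; split; lra.
  rewrite cosD; nra.
have hc1 : cos theta - sin theta <= 1 by have := cos_le1 theta; lra.
have thpi' : theta <= pi by lra.
pose N (p q : 'rV[R]_d) := count (fun z : 'rV[R]_d * 'rV[R]_d => eucl_dist z.1 z.2 < eucl_dist p q)
   [seq (x, y) | x <- S, y <- S].
suff main : forall n p q, (N p q < n)%N -> p \in S -> q \in S -> p != q -> ~~ F p q ->
    graph_dist_le S (fun x y => theta_edge S sel x y /\ ~~ F x y) p q
      (eucl_dist p q / (cos theta - sin theta)).
  by move=> p q; apply: (main (N p q).+1 p q (ltnSn _)).
elim=> [//|n IH] p q hN pS qS pq nF.
have [i hi] := Hcov (q - p).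
have [Huq Hsub Hsz Hmin] := Hsel p i pS.
have [qsel|qnsel] := boolP (q \in sel p i).
  exists 1%N, (fun j => if j is 0%N then p else q); split => //.
  - by case=> [|[|]].
  - case=> // _; split => //; split => //; exists i; by left.
  - rewrite big_ord1 /= ler_pdivlMr //.
    have := norm_ge0 (p - q); rewrite -/(eucl_dist p q); nra.
have qSpC : q \in SpC S (Cn i) p by rewrite mem_filter eq_sym pq hi qS.
have hlt : (size (sel p i) < size (SpC S (Cn i) p))%N.
  have := uniq_leq_size (s1 := q :: sel p i) (s2 := SpC S (Cn i) p).
  apply; first by rewrite /= qnsel Huq.
  by move=> x; rewrite inE => /orP[/eqP->|/Hsub].
have hsz : size (sel p i) = (2 * f + 1)%N.
  move: hlt; rewrite Hsz.
  case: (leqP (2 * f + 1) (size (SpC S (Cn i) p))) => h; first by move/minn_idPl: h.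
  by rewrite ltnn.
have cnt : (count (predU (F p) (F q)) (sel p i) <= f + f)%N.
  have sub1 : {subset sel p i <= S} by move=> x /Hsub; rewrite mem_filter => /andP[].
  have c1 := leq_trans (count_uniq_sub _ (F p) _ _ Huq sub1) (Fdeg _ pS).
  have c2 := leq_trans (count_uniq_sub _ (F q) _ _ Huq sub1) (Fdeg _ qS).
  exact: nat_aux2 _ _ _ _ _ (count_predUI (F p) (F q) (sel p i)) c1 c2.
have : has (predC (predU (F p) (F q))) (sel p i).
  rewrite has_count; apply: (nat_aux _ _ _ cnt).
  by rewrite count_predC hsz.
move/hasP => [r rsel]; rewrite /= negb_or => /andP[nFpr nFqr].
have rSpC := Hsub r rsel; move: (rSpC); rewrite mem_filter => /andP[/andP[rp hri] rS].
have rq : r != q by apply/eqP => e; move: qnsel; rewrite -e rsel.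
have nFrq : ~~ F r q by rewrite Fsym.
have hx : r - p != 0 by rewrite subr_eq0.
have hy : q - p != 0 by rewrite subr_eq0 eq_sym.
have hw := Hu0 i.
have hwi : u i \in Cn i by have := Hray i 1 ler01; rewrite scale1r.
have cxy := angle_cos _ _ _ hx hy (ltW th0) thpi' (Hdiam i _ _ hri hi hx hy).
have cxw := angle_cos _ _ _ hx hw (ltW th0) thpi' (Hdiam i _ _ hri hwi hx hw).
have hproj := Hmin r q rsel qSpC qnsel; rewrite !proj_dist in hproj.
have W0 := norm_gt0 _ hw.
have ww0 : 0 < dotp (u i) (u i) by rewrite -norm_sq exprn_gt0.
have xw0 : 0 < dotp (r - p) (u i).
  apply: lt_le_trans cxw; rewrite !mulr_gt0 // norm_gt0 //.
have hdot : dotp (r - p) (u i) <= dotp (q - p) (u i).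
  rewrite ler_pM2r // in hproj.
  have : dotp (r - p) (u i) / dotp (u i) (u i) <=
      Num.max 0 (dotp (q - p) (u i) / dotp (u i) (u i)).
    by apply: le_trans hproj; rewrite le_max lexx orbT.
  rewrite le_max => /orP[h|h].
    by move: h; rewrite leNgt divr_gt0.
  by rewrite ler_pM2r ?invr_gt0 in h.
have [g1 g2] := geo _ _ _ _ hx hy hw hco hs hc cxy cxw hdot.
have erq : r - p - (q - p) = r - q by rewrite opprB addrA subrK.
rewrite erq in g1 g2.
have dpq : eucl_dist p q = eucl_norm (q - p) by rewrite /eucl_dist -normN opprB.
have dpr : eucl_dist p r = eucl_norm (r - p) by rewrite /eucl_dist -normN opprB.
have hN' : (N r q < n)%N.
  have : (N r q < N p q)%N.
    apply: (count_lt _ _ _ _ (r, q)).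
    - by move=> z /= hz; apply: lt_trans hz _; rewrite dpq.
    - exact: allpairs_f.
    - by rewrite /= dpq.
    - by rewrite /= ltxx.
  move=> h; exact: leq_trans h hN.
have [n0 [x [x0 xn xS xE xsum]]] := IH r q hN' rS qS rq nFrq.
exists n0.+1, (fun j => if j is j'.+1 then x j' else p); split => //.
- by case=> // j hj; apply: xS.
- case=> [_|j hj] /=; last exact: xE.
  rewrite x0; split => //; split => //; exists i; by left.
- rewrite big_ord_recl /= x0.
  rewrite (eq_bigr (fun k : 'I_n0 => eucl_dist (x k) (x k.+1))); last first.
    by move=> k _.
  rewrite dpr dpq.
  move: xsum; rewrite /eucl_dist => xsum.
  lra.
Qed.
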